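(* Let $P_0>0$, $P_1>0$, $c>0$ be real numbers and let $a_1,b_1,h,g$ be nonzero complex numbers. Define $L'=P_0(|a_1|^2+|h|^2)$, $M'=2P_0|a_1||h|$, $N'=P_1(|b_1|^2+|g|^2)+c$, $P'=2P_1|b_1||g|$, $s=\angle a_1-\angle h$, $t=\angle b_1-\angle g$ (where $\angle z$ denotes the argument of $z$), and consider the function of $x\in\mathbb{R}$ $$\gamma_1(x)=\frac{P_0|a_1e^{jx}+h|^2}{P_1|b_1e^{jx}+g|^2+c}=\frac{L'+M'\cos(s+x)}{N'+P'\cos(t+x)}.$$ Let $C'=(L'P')^2+(M'N')^2-2L'M'N'P'\cos(s-t)$. Then at every stationary point $x^*$ of $\gamma_1$ (i.e. $\gamma_1'(x^* )=0$), the value $\gamma_1^*=\gamma_1(x^* )$ equals one of the two values $$\gamma_1^*=\frac{L'}{N'}-\frac{1}{N'}\,\frac{C'}{P'\bigl(L'P'-M'N'\cos(s-t)\bigr)\pm N'\sqrt{C'-\bigl(M'P'\sin(s-t)\bigr)^2}}.$$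
   Context: This is the SINR of a receiver assisted by a one-element passive reconfigurable surface with phase shift $\theta_1=e^{jx}$, one interferer, reflected signal channel $a_1$, reflected interferer channel $b_1$, direct signal channel $h$, direct interferer channel $g$, noise power $c$, and transmit powers $P_0,P_1$. *)

(* Defs.v *)
From Stdlib Require Import Reals.
From Coquelicot Require Export Coquelicot.
Open Scope R_scope.

Definition Carg (z : C) : R :=
  let x := fst z in let y := snd z in
  if Rlt_dec 0 x then atan (y / x)
  else if Rlt_dec x 0 then
    (if Rle_dec 0 y then atan (y / x) + PI else atan (y / x) - PI)
  else if Rlt_dec 0 y then PI / 2
  else if Rlt_dec y 0 then - (PI / 2)
  else 0.

Definition cexpj (x : R) : C := (cos x, sin x).

Definition gamma1 (P0 P1 c : R) (a1 b1 h g : C) (x : R) : R :=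
  P0 * (Cmod (a1 * cexpj x + h)) ^ 2 / (P1 * (Cmod (b1 * cexpj x + g)) ^ 2 + c).

(* Main.v *)
Require Import Defs.
From Stdlib Require Import Reals Lra Psatz.
From Coquelicot Require Import Coquelicot.
Open Scope R_scope.

Lemma sqrt_helper (x y : R) : x <> 0 ->
  sqrt (1 + (y / x)²) = sqrt (x ^ 2 + y ^ 2) / Rabs x.
Proof.
  intros hx.
  assert (hA : 0 < Rabs x) by (apply Rabs_pos_lt; auto).
  assert (hS : 0 <= sqrt (x ^ 2 + y ^ 2)) by apply sqrt_pos.
  rewrite <- (sqrt_pow2 (sqrt (x ^ 2 + y ^ 2) / Rabs x)).
  2: { apply Rmult_le_pos; auto. left; apply Rinv_0_lt_compat; auto. }
  f_equal.
  unfold Rdiv. rewrite Rpow_mult_distr, pow2_sqrt by nra.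
  rewrite pow_inv, pow2_abs. unfold Rsqr. field. auto.
Qed.

Lemma Carg_spec (z : C) : z <> 0%C ->
  fst z = Cmod z * cos (Carg z) /\ snd z = Cmod z * sin (Carg z).
Proof.
  destruct z as [x y]. intros hz. unfold Carg, Cmod. simpl fst; simpl snd.
  destruct (Rlt_dec 0 x) as [hx|hx].
  { rewrite cos_atan, sin_atan, sqrt_helper by lra.
    rewrite Rabs_right by lra.
    assert (0 < sqrt (x^2+y^2)) by (apply sqrt_lt_R0; nra).
    split; field; lra. }
  destruct (Rlt_dec x 0) as [hx'|hx'].
  { assert (0 < sqrt (x^2+y^2)) by (apply sqrt_lt_R0; nra).
    destruct (Rle_dec 0 y).
    - rewrite cos_plus, sin_plus, cos_PI, sin_PI, cos_atan, sin_atan, sqrt_helper by lra.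
      rewrite Rabs_left by lra. split; field; lra.
    - rewrite cos_minus, sin_minus, cos_PI, sin_PI, cos_atan, sin_atan, sqrt_helper by lra.
      rewrite Rabs_left by lra. split; field; lra. }
  assert (x = 0) by lra. subst x.
  destruct (Rlt_dec 0 y).
  { rewrite cos_PI2, sin_PI2. replace (0^2+y^2) with (y^2) by ring.
    rewrite sqrt_pow2 by lra. split; ring. }
  destruct (Rlt_dec y 0).
  { rewrite cos_neg, sin_neg, cos_PI2, sin_PI2. replace (0^2+y^2) with ((-y)^2) by ring.
    rewrite sqrt_pow2 by lra. split; ring. }
  exfalso; apply hz. apply injective_projections; simpl; lra.
Qed.

Lemma key1 (a h : C) x : a <> 0%C -> h <> 0%C ->
  Cmod (a * cexpj x + h) ^ 2 =
  Cmod a ^ 2 + Cmod h ^ 2 + 2 * Cmod a * Cmod h * cos (Carg a - Carg h + x).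
Proof.
  intros ha hh.
  destruct (Carg_spec a ha) as [ax ay].
  destruct (Carg_spec h hh) as [hx hy].
  rewrite Cmod2_alt.
  replace (Re (a * cexpj x + h)) with (fst a * cos x - snd a * sin x + fst h) by (unfold cexpj; simpl; ring).
  replace (Im (a * cexpj x + h)) with (fst a * sin x + snd a * cos x + snd h) by (unfold cexpj; simpl; ring).
  rewrite ax, ay, hx, hy.
  replace (Carg a - Carg h + x) with ((Carg a + x) - Carg h) by ring.
  rewrite cos_minus, cos_plus, sin_plus.
  set (A := Cmod a). set (H := Cmod h).
  set (ca := cos (Carg a)). set (sa := sin (Carg a)).
  set (ce := cos (Carg h)). set (se := sin (Carg h)).
  set (cx := cos x). set (sx := sin x).
  assert (e1 : ca^2 + sa^2 = 1) by (unfold ca, sa; rewrite <- !Rsqr_pow2; rewrite Rplus_comm; apply sin2_cos2).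
  assert (e2 : ce^2 + se^2 = 1) by (unfold ce, se; rewrite <- !Rsqr_pow2; rewrite Rplus_comm; apply sin2_cos2).
  assert (e3 : cx^2 + sx^2 = 1) by (unfold cx, sx; rewrite <- !Rsqr_pow2; rewrite Rplus_comm; apply sin2_cos2).
  match goal with |- ?l = ?r => assert (l - r = A^2*((ca^2+sa^2)*(cx^2+sx^2) - 1) + H^2*(ce^2+se^2-1)) by ring end.
  rewrite e1, e2, e3 in H0. lra.
Qed.
Lemma alg (L M N P cd sd c1 s1 c2 s2 G : R) :
  0 <= P -> P < N -> c1 = c2*cd - s2*sd -> s1 = s2*cd + c2*sd ->
  c2^2 + s2^2 = 1 -> cd^2 + sd^2 = 1 -> N + P*c2 <> 0 ->
  - M * s1 * (N + P*c2) + P * s2 * (L + M*c1) = 0 ->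
  G = (L + M*c1) / (N + P*c2) ->
  let C := (L*P)^2 + (M*N)^2 - 2*L*M*N*P*cd in
  G = L / N - (1 / N) * (C / (P * (L*P - M*N*cd) + N * sqrt (C - (M*P*sd)^2)))
  \/
  G = L / N - (1 / N) * (C / (P * (L*P - M*N*cd) - N * sqrt (C - (M*P*sd)^2))).
Proof.
  intros hP hPN e1 e2 u2 ud hden hder hG C.
  assert (hN : 0 < N) by lra.
  assert (E2 : M*c1 - G*P*c2 = G*N - L).
  { rewrite hG. field. auto. }
  assert (E1 : M*s1 - G*P*s2 = 0).
  { apply (Rmult_eq_reg_r (N + P*c2)); auto. rewrite Rmult_0_l.
    rewrite hG. transitivity (-( -M*s1*(N+P*c2) + P*s2*(L+M*c1))). field. auto. rewrite hder; ring. }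
  assert (Q : M^2 - 2*G*P*M*cd + G^2*P^2 = (G*N-L)^2).
  { assert (Q0 : (M*c1 - G*P*c2)^2 + (M*s1 - G*P*s2)^2 = (G*N-L)^2) by (rewrite E1, E2; ring).
    rewrite <- Q0. subst c1 s1.
    match goal with |- ?l = ?r => assert (l - r = M^2*(1 - (cd^2+sd^2)*(c2^2+s2^2)) + G^2*P^2*(1-(c2^2+s2^2)) - 2*G*P*M*cd*(1 - (c2^2+s2^2))) by ring end.
    rewrite u2, ud in H. lra. }
  set (y := L - N*G).
  set (a := P^2 - N^2).
  set (B := P*(L*P - M*N*cd)).
  assert (ha : a < 0) by (unfold a; nra).
  assert (Qy : a*y^2 - 2*B*y + C = 0).
  { assert (a*y^2 - 2*B*y + C = N^2*(M^2 - 2*G*P*M*cd + G^2*P^2 - (G*N-L)^2)) by (unfold a, y, B, C; ring).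
    rewrite H, Q. ring. }
  assert (hC : C = (L*P - M*N*cd)^2 + (M*N*sd)^2).
  { unfold C. match goal with |- ?l = ?r => assert (l - r = (M*N)^2*(1 - (cd^2+sd^2))) by ring end.
    rewrite ud in H. lra. }
  assert (hD : B^2 - a*C = N^2 * (C - (M*P*sd)^2)).
  { unfold B, a. rewrite hC.
    ring. }
  assert (hC0 : 0 <= C) by (rewrite hC; apply Rplus_le_le_0_compat; apply pow2_ge_0).
  set (D := C - (M*P*sd)^2) in *.
  assert (hD0 : 0 <= D).
  { assert (0 <= N^2 * D) by (rewrite <- hD; nra).
    assert (0 < N^2) by nra. nra. }
  set (r := sqrt D).
  assert (hr : r^2 = D) by (unfold r; apply pow2_sqrt; auto).
  assert (hr0 : 0 <= r) by (unfold r; apply sqrt_pos).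
  assert (F : (a*y - B - N*r)*(a*y - B + N*r) = 0).
  { transitivity (a*(a*y^2 - 2*B*y + C) + (B^2 - a*C) - N^2*r^2). ring.
    rewrite Qy, hD, hr. ring. }
  assert (hGy : G = L/N - 1/N * y) by (unfold y; field; lra).
  assert (Cz : C = 0 -> y = 0 /\ B = 0 /\ r = 0).
  { intros C0.
    assert (hk1 : L*P - M*N*cd = 0).
    { assert (hh : (L*P-M*N*cd)^2 = 0) by (pose proof (pow2_ge_0 (M*N*sd)); pose proof (pow2_ge_0 (L*P-M*N*cd)); lra). nra. }
    assert (hB : B = 0) by (unfold B; rewrite hk1; ring).
    assert (hr2 : r = 0).
    { assert (hq : N^2*r^2 = 0) by (rewrite hr, <- hD, hB, C0; ring).
      destruct (Rmult_integral _ _ hq) as [q|q].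
      - exfalso; apply (pow_nonzero N 2); lra.
      - destruct (Req_dec r 0); auto. exfalso; apply (pow_nonzero r 2); auto. }
    split; [|split]; auto.
    assert (hay : a*y = 0) by nra.
    destruct (Rmult_integral _ _ hay); auto; lra. }
  destruct (Rmult_integral _ _ F) as [F1|F1].
  - right. rewrite hGy. f_equal. f_equal.
    destruct (Req_dec (B - N*r) 0) as [Z|Z].
    + assert (a*C = 0) by nra.
      assert (C0 : C = 0) by nra.
      destruct (Cz C0) as [-> _]. rewrite C0. unfold Rdiv. ring.
    + assert (y*(B - N*r) = C).
      { apply (Rmult_eq_reg_l a); [|lra].
        transitivity ((B + N*r)*(B - N*r)). assert (ey : a*y = B + N*r) by lra. rewrite <- Rmult_assoc, ey. reflexivity.
        transitivity (B^2 - N^2*r^2). ring. rewrite hr, <- hD. ring. }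
      fold B D r. rewrite <- H. field. auto.
  - left. rewrite hGy. f_equal. f_equal.
    destruct (Req_dec (B + N*r) 0) as [Z|Z].
    + assert (a*C = 0) by nra.
      assert (C0 : C = 0) by nra.
      destruct (Cz C0) as [-> _]. rewrite C0. unfold Rdiv. ring.
    + assert (y*(B + N*r) = C).
      { apply (Rmult_eq_reg_l a); [|lra].
        transitivity ((B - N*r)*(B + N*r)). assert (ey : a*y = B - N*r) by lra. rewrite <- Rmult_assoc, ey. reflexivity.
        transitivity (B^2 - N^2*r^2). ring. rewrite hr, <- hD. ring. }
      fold B D r. rewrite <- H. field. auto.
Qed.

Theorem theorem1 (P0 P1 c : R) (a1 b1 h g : C)
  (hP0 : 0 < P0) (hP1 : 0 < P1) (hc : 0 < c)
  (ha1 : a1 <> 0%C) (hb1 : b1 <> 0%C) (hh : h <> 0%C) (hg : g <> 0%C)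
  (xs : R)
  (hstat : is_derive (gamma1 P0 P1 c a1 b1 h g) xs 0) :
  let L' := P0 * (Cmod a1 ^ 2 + Cmod h ^ 2) in
  let M' := 2 * P0 * Cmod a1 * Cmod h in
  let N' := P1 * (Cmod b1 ^ 2 + Cmod g ^ 2) + c in
  let P' := 2 * P1 * Cmod b1 * Cmod g in
  let s := Carg a1 - Carg h in
  let t := Carg b1 - Carg g in
  let C' := (L' * P') ^ 2 + (M' * N') ^ 2 - 2 * L' * M' * N' * P' * cos (s - t) in
  let gs := gamma1 P0 P1 c a1 b1 h g xs in
  gs = L' / N' - (1 / N') * (C' / (P' * (L' * P' - M' * N' * cos (s - t))
                                   + N' * sqrt (C' - (M' * P' * sin (s - t)) ^ 2)))
  \/
  gs = L' / N' - (1 / N') * (C' / (P' * (L' * P' - M' * N' * cos (s - t))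
                                   - N' * sqrt (C' - (M' * P' * sin (s - t)) ^ 2))).
Proof.
  intros L' M' N' P' s t C' gs.
  assert (hB0 : 0 <= Cmod b1) by apply Cmod_ge_0.
  assert (hG0 : 0 <= Cmod g) by apply Cmod_ge_0.
  assert (hP : 0 <= P') by (unfold P'; repeat apply Rmult_le_pos; lra).
  assert (hPN : P' < N').
  { unfold P', N'. assert (0 <= P1 * (Cmod b1 - Cmod g)^2) by (apply Rmult_le_pos; [lra| apply pow2_ge_0]). nra. }
  assert (hden : forall x, N' + P' * cos (t + x) > 0).
  { intros x. pose proof (COS_bound (t+x)) as [hc1 hc2]. nra. }
  assert (hgam : forall x, gamma1 P0 P1 c a1 b1 h g x = (L' + M' * cos (s + x)) / (N' + P' * cos (t + x))).
  { intros x. unfold gamma1. rewrite !key1 by auto. unfold L', M', N', P', s, t. field.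
    specialize (hden x). unfold N', P', t in hden. lra. }
  set (f := fun x => (L' + M' * cos (s + x)) / (N' + P' * cos (t + x))).
  assert (hf : is_derive f xs 0).
  { apply (is_derive_ext (gamma1 P0 P1 c a1 b1 h g)); auto. }
  set (D0 := (- M' * sin (s + xs) * (N' + P' * cos (t + xs)) + P' * sin (t + xs) * (L' + M' * cos (s + xs))) / (N' + P' * cos (t + xs))^2).
  assert (hf2 : is_derive f xs D0).
  { unfold f, D0. auto_derive. specialize (hden xs). lra. field. specialize (hden xs). lra. }
  assert (hD0 : D0 = 0).
  { rewrite <- (is_derive_unique _ _ _ hf2). apply is_derive_unique; auto. }
  assert (hnum : - M' * sin (s + xs) * (N' + P' * cos (t + xs)) + P' * sin (t + xs) * (L' + M' * cos (s + xs)) = 0).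
  { specialize (hden xs). unfold D0 in hD0.
    assert (hq : 0 < (N' + P' * cos (t + xs))^2) by nra.
    apply (Rmult_eq_reg_r (/ (N' + P' * cos (t + xs))^2)). rewrite Rmult_0_l. exact hD0.
    apply Rgt_not_eq. apply Rinv_0_lt_compat; auto. }
  assert (e1 : cos (s + xs) = cos (t + xs) * cos (s - t) - sin (t + xs) * sin (s - t)).
  { rewrite <- cos_plus. f_equal. ring. }
  assert (e2 : sin (s + xs) = sin (t + xs) * cos (s - t) + cos (t + xs) * sin (s - t)).
  { rewrite <- sin_plus. f_equal. ring. }
  assert (u2 : cos (t + xs) ^ 2 + sin (t + xs) ^ 2 = 1) by (rewrite <- !Rsqr_pow2; rewrite Rplus_comm; apply sin2_cos2).
  assert (ud : cos (s - t) ^ 2 + sin (s - t) ^ 2 = 1) by (rewrite <- !Rsqr_pow2; rewrite Rplus_comm; apply sin2_cos2).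
  refine (alg L' M' N' P' (cos (s - t)) (sin (s - t)) (cos (s + xs)) (sin (s + xs)) (cos (t + xs)) (sin (t + xs)) gs hP hPN e1 e2 u2 ud _ hnum _).
  - specialize (hden xs). lra.
  - unfold gs. apply hgam.
Qed.
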